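(* Let $\delta\in(0,1]$, $\varepsilon>0$, and let $G=(V,E)$ be a simple graph on $n$ vertices with minimal degree at least $\delta n$. Let $V=V_1\sqcup\dots\sqcup V_k$ be an $(\varepsilon,\delta,n^{1.5})$-good decomposition of $G$ with parameter $\theta$, and let $X$ be the simple random walk on $G$. Then for any $C>0$, any $i\in[k]$ and any $v\in V$, \[ \Pr_v\left(\exists t\in[1,C\sqrt n]: X_t\in V_i,\ X_{t+1}\notin V_i\right)\le\frac{C\theta^2\varepsilon^9}{\delta^2}. \] Furthermore, for any $C>0$ and $i\in[k]$ there exists a set $V_i'\subseteq V_i$ with $|V_i'|\ge\delta^4n/80$ such that for every $v\in V_i'$, \[ \Pr_v\left(X[0,C\sqrt n]\subseteq V_i\right)\ge 1-\frac{80C\theta^2\varepsilon^9}{\delta^6}. \]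
   Context: $\deg(v,U)$ is the number of edges between $v$ and $U$, $E(A,B)$ the set of edges between $A$ and $B$, $G[U]$ the induced subgraph, and the spectral gap of a graph is $1-\lambda_2$ for the transition matrix of its simple random walk. For $\varepsilon\in(0,1)$, $\delta\in(0,1]$, $\beta>0$ and $G$ on $n$ vertices with minimal degree at least $\delta n$, a partition $V=V_1\sqcup\dots\sqcup V_k$ is an $(\varepsilon,\delta,\beta)$-good decomposition with parameter $\theta$ if $\theta\in[\varepsilon^{11\cdot 2^{2/\delta}},\varepsilon]$ and for every $i\in[k]$: (1) $k\le 2/\delta$; (2) $|V_i|\ge\delta n/2$; (3) the spectral gap of $G[V_i]$ is at least $\frac{\delta^{15}\theta\beta}{2^{31}n^2}$; (4) $\deg(v,V_i)\ge\delta^4n/40$ for all $v\in V_i$; (5) $|E(V_i,V\setminus V_i)|\le\varepsilon^9\theta^2\beta$. $X[a,b]$ denotes $\{X_j: j\in[\lceil a\rceil,\lfloor b\rfloor]\cap\mathbb N\}$ and $\Pr_v$ refers to the walk started at $v$. *)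

(* Defs.v *)
From HB Require Import structures.
From mathcomp Require Import all_boot all_order all_algebra.
From mathcomp Require Import reals exp.
Set Implicit Arguments. Unset Strict Implicit. Unset Printing Implicit Defensive.
Import Order.TTheory GRing.Theory Num.Theory.
Local Open Scope ring_scope.

Definition simple_graph (T : finType) (e : rel T) : Prop :=
  symmetric e /\ irreflexive e.

Definition degU (T : finType) (e : rel T) (v : T) (U : {set T}) : nat :=
  #|[set u in U | e v u]|.

Definition cut_size (T : finType) (e : rel T) (A : {set T}) : nat :=
  #|[set p : T * T | [&& p.1 \in A, p.2 \notin A & e p.1 p.2]]|.

Definition rw_mx (R : realType) (T : finType) (e : rel T) (U : {set T})
  : 'M[R]_#|U| :=
  \matrix_(i, j) ((e (enum_val i) (enum_val j))%:R
                  / (degU e (enum_val i) U)%:R).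

(* The spectral gap 1 - lambda_2 of G[U] is at least g: the eigenvalues of the
   transition matrix (roots of its characteristic polynomial, with
   multiplicity, listed in nonincreasing order as s) satisfy g <= 1 - s_2. *)
Definition spectral_gap_ge (R : realType) (T : finType) (e : rel T)
  (U : {set T}) (g : R) : Prop :=
  exists s : seq R,
    [/\ sorted (fun x y => y <= x) s,
        char_poly (rw_mx R e U) = \prod_(mu <- s) ('X - mu%:P)
      & g <= 1 - s`_1].

Definition good_decomposition (R : realType) (T : finType) (e : rel T)
  (eps delta beta : R) (k : nat) (P : 'I_k -> {set T}) (theta : R) : Prop :=
  let n : R := #|T|%:R in
  [/\ 0 < eps < 1, 0 < delta <= 1, 0 < beta,
      (forall v : T, delta * n <= (degU e v setT)%:R) &
      [/\ (forall i j : 'I_k, i != j -> [disjoint P i & P j]),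
      (forall v : T, exists i : 'I_k, v \in P i),
      powR eps (11 * powR 2 (2 / delta)) <= theta <= eps,
      k%:R <= 2 / delta &
      forall i : 'I_k,
        [/\ delta * n / 2 <= #|P i|%:R,
            spectral_gap_ge e (P i)
              (delta ^+ 15 * theta * beta / (2 ^+ 31 * n ^+ 2)),
            (forall v, v \in P i -> delta ^+ 4 * n / 40 <= (degU e v (P i))%:R) &
            (cut_size e (P i))%:R <= eps ^+ 9 * theta ^+ 2 * beta]]].

(* Pr_v(A(X_0,...,X_L)) for the simple random walk X on G started at v:
   sum over all vertex sequences f_0 = v, f_1, ..., f_L of the product of
   transition probabilities P(f_j, f_{j+1}) = 1{f_j ~ f_{j+1}}/deg(f_j),
   times the indicator of the event A (which may only inspect X_0..X_L). *)
Definition walk_prob (R : realType) (T : finType) (e : rel T) (L : nat)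
  (v : T) (A : (nat -> T) -> bool) : R :=
  \sum_(f : {ffun 'I_L.+1 -> T} | f ord0 == v)
    ((\prod_(j < L) ((e (f (inord j)) (f (inord j.+1)))%:R
                      / (degU e (f (inord j)) setT)%:R))
     * (A (fun j => f (inord j)))%:R).

Arguments walk_prob {R T} e L v A.
Arguments spectral_gap_ge {R T} e U g.
Arguments good_decomposition {R T} e eps delta beta {k} P theta.

(* Main.v *)
Require Import Defs.
From HB Require Import structures.
From mathcomp Require Import all_boot all_order all_algebra.
From mathcomp Require Import reals exp.
From mathcomp Require Import lra ring.
Unset Printing Implicit Defensive.
Import Order.TTheory GRing.Theory Num.Theory.
Local Open Scope ring_scope.

Definition pr {R : realType} {T : finType} (e : rel T) (u x : T) : R :=
  (e u x)%:R / (degU e u setT)%:R.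
Definition wt {R : realType} {T : finType} (e : rel T) {L} (f : {ffun 'I_L.+1 -> T}) : R :=
  \prod_(j < L) pr e (f (inord j)) (f (inord j.+1)).
Definition WS {R : realType} {T : finType} (e : rel T) L v (H : {ffun 'I_L.+1 -> T} -> R) : R :=
  \sum_(f : {ffun 'I_L.+1 -> T} | f ord0 == v) wt e f * H f.

Lemma walk_probE (R : realType) (T : finType) (e : rel T) L v A :
  walk_prob e L v A = WS e L v (fun f => ((A (fun j => f (inord j)))%:R : R)).
Proof. by []. Qed.

Definition ext {T : finType} {L} (g : {ffun 'I_L.+1 -> T}) (x : T) : {ffun 'I_L.+2 -> T} :=
  [ffun j : 'I_L.+2 => if (j < L.+1)%N then g (inord j) else x].
Definition trunc {T : finType} {L} (f : {ffun 'I_L.+2 -> T}) : {ffun 'I_L.+1 -> T} * T :=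
  ([ffun j : 'I_L.+1 => f (inord j)], f ord_max).

Lemma ext_bij (T : finType) L :
  bijective (fun p : {ffun 'I_L.+1 -> T} * T => ext p.1 p.2).
Proof.
exists (@trunc T L).
- case=> g x /=; rewrite /trunc; congr pair.
    apply/ffunP => j; rewrite !ffunE inordK; last by apply: (ltn_trans (ltn_ord j)).
    rewrite ltn_ord; congr (g _); apply: val_inj; rewrite /= inordK //.
  by rewrite ffunE /= ltnn.
- move=> f; apply/ffunP=> j; rewrite /trunc ffunE /=.
  case: ifP => hj.
    rewrite ffunE; congr (f _); apply: val_inj; rewrite /= !inordK //.
  congr (f _); apply: val_inj => /=.
  have := ltn_ord j; move: hj; rewrite ltnS; move/negbT; rewrite -ltnNge => h1 h2.
  by apply/eqP; rewrite eqn_leq h1 -ltnS h2 andbT.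
Qed.

Lemma sum_ext (R : realType) (T : finType) L (F : {ffun 'I_L.+2 -> T} -> R) :
  \sum_f F f = \sum_(g : {ffun 'I_L.+1 -> T}) \sum_(x : T) F (ext g x).
Proof.
rewrite pair_bigA /= (reindex (fun p : _ * _ => ext p.1 p.2)) //=.
by apply: onW_bij; exact: ext_bij.
Qed.

Lemma ext_lt (T : finType) L (g : {ffun 'I_L.+1 -> T}) x (j : nat) :
  (j < L.+1)%N -> ext g x (inord j) = g (inord j).
Proof. by move=> hj; rewrite ffunE inordK ?hj // (ltn_trans hj). Qed.

Lemma ext_last (T : finType) L (g : {ffun 'I_L.+1 -> T}) x :
  ext g x (inord L.+1) = x.
Proof. by rewrite ffunE inordK // ltnn. Qed.

Lemma ext0 (T : finType) L (g : {ffun 'I_L.+1 -> T}) x : ext g x ord0 = g ord0.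
Proof.
have -> : (ord0 : 'I_L.+2) = inord 0 by apply: val_inj; rewrite /= inordK.
rewrite ext_lt //; congr (g _); apply: val_inj; by rewrite /= inordK.
Qed.

Lemma ext_max (T : finType) L (g : {ffun 'I_L.+1 -> T}) x : ext g x ord_max = x.
Proof.
have -> : (ord_max : 'I_L.+2) = inord L.+1 by apply: val_inj; rewrite /= inordK.
exact: ext_last.
Qed.

Lemma inord_max (T : finType) L (g : {ffun 'I_L.+1 -> T}) : g (inord L) = g ord_max.
Proof. by congr (g _); apply: val_inj; rewrite /= inordK. Qed.

Lemma wt_ext (R : realType) (T : finType) (e : rel T) L (g : {ffun 'I_L.+1 -> T}) x :
  wt e (ext g x) = wt e g * (pr e (g ord_max) x : R).
Proof.
rewrite /wt big_ord_recr /=; congr (_ * _).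
  apply: eq_bigr => j _.
  have h1 : (j < L.+1)%N by apply: ltnW; rewrite ltnS.
  have h2 : (j.+1 < L.+1)%N by rewrite ltnS.
  by rewrite (@ext_lt _ _ g x _ h1) (@ext_lt _ _ g x _ h2).
by rewrite (@ext_lt _ _ g x _ (ltnSn L)) ext_last inord_max.
Qed.

Lemma WS_step (R : realType) (T : finType) (e : rel T) L v (H : {ffun 'I_L.+2 -> T} -> R) :
  WS e L.+1 v H = WS e L v (fun g => \sum_x pr e (g ord_max) x * H (ext g x)).
Proof.
rewrite /WS big_mkcond sum_ext /= [RHS]big_mkcond; apply: eq_bigr => g _.
under eq_bigr do rewrite ext0.
case: eqP => _; last by rewrite big1.
by rewrite mulr_sumr; apply: eq_bigr => x _; rewrite wt_ext mulrA.
Qed.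

Definition degpos {R : realType} {T : finType} (e : rel T) :=
  forall u : T, 0 < ((degU e u setT)%:R : R).

Lemma rowsum (R : realType) (T : finType) (e : rel T) u :
  0 < ((degU e u setT)%:R : R) -> \sum_x (pr e u x : R) = 1.
Proof.
move=> hd; rewrite /pr -mulr_suml -natr_sum.
suff -> : (\sum_x (e u x : nat))%N = degU e u setT by rewrite divff // gt_eqF.
rewrite /degU -sum1_card [RHS]big_mkcond /=; apply: eq_bigr => x _.
by rewrite !inE; case: (e u x).
Qed.

Lemma wt_ge0 (R : realType) (T : finType) (e : rel T) L (f : {ffun 'I_L.+1 -> T}) :
  0 <= (wt e f : R).
Proof. by apply: prodr_ge0 => j _; rewrite /pr divr_ge0. Qed.

Lemma WS_eq (R : realType) (T : finType) (e : rel T) L v (H H' : {ffun 'I_L.+1 -> T} -> R) :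
  (forall f, H f = H' f) -> WS e L v H = WS e L v H'.
Proof. by move=> h; apply: eq_bigr => f _; rewrite h. Qed.

Lemma WS_le (R : realType) (T : finType) (e : rel T) L v (H H' : {ffun 'I_L.+1 -> T} -> R) :
  (forall f, H f <= H' f) -> WS e L v H <= WS e L v H'.
Proof. by move=> h; apply: ler_sum => f _; rewrite ler_wpM2l ?wt_ge0. Qed.

Lemma WS_add (R : realType) (T : finType) (e : rel T) L v (H H' : {ffun 'I_L.+1 -> T} -> R) :
  WS e L v (fun f => H f + H' f) = WS e L v H + WS e L v H'.
Proof. by rewrite /WS -big_split /=; apply: eq_bigr => f _; rewrite mulrDr. Qed.

Lemma WS_opp (R : realType) (T : finType) (e : rel T) L v (H : {ffun 'I_L.+1 -> T} -> R) :
  WS e L v (fun f => - H f) = - WS e L v H.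
Proof. by rewrite /WS -sumrN; apply: eq_bigr => f _; rewrite mulrN. Qed.

Lemma WS_scale (R : realType) (T : finType) (e : rel T) L v c (H : {ffun 'I_L.+1 -> T} -> R) :
  WS e L v (fun f => c * H f) = c * WS e L v H.
Proof. by rewrite /WS mulr_sumr; apply: eq_bigr => f _; rewrite mulrCA. Qed.

Lemma WS_sum (R : realType) (T : finType) (e : rel T) L v n (H : 'I_n -> {ffun 'I_L.+1 -> T} -> R) :
  WS e L v (fun f => \sum_(i < n) H i f) = \sum_(i < n) WS e L v (H i).
Proof.
rewrite /WS exchange_big /=; apply: eq_bigr => f _; by rewrite mulr_sumr.
Qed.

Lemma WS0 (R : realType) (T : finType) (e : rel T) v (H : {ffun 'I_1 -> T} -> R) :
  WS e 0 v H = H [ffun=> v].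
Proof.
rewrite /WS (big_pred1 [ffun=> v]) /wt ?big_ord0 ?mul1r //.
move=> f /=; apply/eqP/eqP => [<-|->]; last by rewrite ffunE.
by apply/ffunP => j; rewrite ffunE; congr (f _); apply: val_inj; case: j => -[].
Qed.

Lemma WS_mass (R : realType) (T : finType) (e : rel T) L v :
  @degpos R T e -> WS e L v (fun _ => 1 : R) = 1.
Proof.
move=> hd; elim: L => [|L IH]; first by rewrite WS0.
rewrite WS_step -[RHS]IH; apply: WS_eq => g.
by under eq_bigr do rewrite mulr1; rewrite rowsum.
Qed.

Lemma WS_const (R : realType) (T : finType) (e : rel T) L v (c : R) :
  @degpos R T e -> WS e L v (fun _ => c) = c.
Proof.
move=> hd; rewrite -[RHS]mulr1 -(@WS_mass R T e L v hd) -WS_scale; apply: WS_eq => f; by rewrite mulr1.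
Qed.

Lemma WS_ord0 (R : realType) (T : finType) (e : rel T) L v (K : T -> R) (H : {ffun 'I_L.+1 -> T} -> R) :
  WS e L v (fun f => K (f ord0) * H f) = K v * WS e L v H.
Proof.
rewrite /WS mulr_sumr; apply: eq_bigr => f /eqP ->; by rewrite mulrCA.
Qed.

Definition Ht {R : realType} {T : finType} (A : {set T}) (t : nat) L
  (f : {ffun 'I_L.+1 -> T}) : R :=
  ((f (inord t) \in A) && (f (inord t.+1) \notin A))%:R.

Definition phi {R : realType} {T : finType} (e : rel T) (A : {set T}) (z : T) : R :=
  (z \in A)%:R * \sum_x pr e z x * (x \notin A)%:R.

Lemma LT (R : realType) (T : finType) (e : rel T) (A : {set T}) v t L :
  @degpos R T e -> (t < L)%N ->
  WS e L v (@Ht R T A t L) = WS e t v (fun g => phi e A (g ord_max)).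
Proof.
move=> hd; elim: L => [//|L IH]; rewrite ltnS leq_eqVlt => /orP[/eqP ->|htL].
  rewrite WS_step; apply: WS_eq => g.
  rewrite /Ht /phi.
  under eq_bigr do rewrite (@ext_lt _ _ g _ _ (ltnSn L)) ext_last inord_max.
  case: (g ord_max \in A) => /=; first by rewrite mul1r.
  by rewrite mul0r big1 // => x _; rewrite mulr0.
rewrite -IH // WS_step; apply: WS_eq => g.
have h1 : (t < L.+1)%N by apply: ltnW; rewrite ltnS.
have h2 : (t.+1 < L.+1)%N by rewrite ltnS.
rewrite /Ht.
under eq_bigr do rewrite (@ext_lt _ _ g _ _ h1) (@ext_lt _ _ g _ _ h2).
by rewrite -mulr_suml rowsum ?mul1r.
Qed.

Definition psi {R : realType} {T : finType} (e : rel T) (A : {set T}) (z : T) : R :=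
  (z \in A)%:R * \sum_x (e z x)%:R * (x \notin A)%:R.

Lemma psi_ge0 (R : realType) (T : finType) (e : rel T) A z : 0 <= (psi e A z : R).
Proof. by rewrite /psi mulr_ge0 // sumr_ge0 // => x _; rewrite mulr_ge0. Qed.

Lemma phi_ge0 (R : realType) (T : finType) (e : rel T) A z : 0 <= (phi e A z : R).
Proof. by rewrite /phi mulr_ge0 // sumr_ge0 // => x _; rewrite mulr_ge0 // /pr divr_ge0. Qed.

Lemma sum_psi (R : realType) (T : finType) (e : rel T) A :
  \sum_z (psi e A z : R) = (cut_size e A)%:R.
Proof.
rewrite /cut_size -sum1_card [in RHS]big_mkcond /= natr_sum.
transitivity (\sum_(p : T * T) (fun a b => (((a \in A) && (b \notin A) && e a b)%:R : R)) p.1 p.2); last first.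
  by apply: eq_bigr => -[a b] _; rewrite !inE /=; case: (a \in A) => //=; case: (b \in A).
rewrite -(pair_bigA _ (fun a b => (((a \in A) && (b \notin A) && e a b)%:R : R))) /=.
apply: eq_bigr => z _; rewrite /psi mulr_sumr; apply: eq_bigr => x _.
case: (z \in A); case: (x \in A); case: (e z x); rewrite /=.
all: rewrite ?(mul1r, mul0r, mulr0, mulr1) //.
Qed.

Lemma pr_le (R : realType) (T : finType) (e : rel T) (D : R) z x :
  0 < D -> D <= (degU e z setT)%:R -> pr e z x <= D^-1.
Proof.
move=> hD hz; rewrite /pr.
have hz0 : 0 < ((degU e z setT)%:R : R) by apply: lt_le_trans hz.
apply: (@le_trans _ _ ((degU e z setT)%:R^-1)).
  by rewrite ler_pdivrMr // mulVf ?gt_eqF // lern1 leq_b1.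
by rewrite lef_pV2 ?posrE.
Qed.

Lemma phi_le (R : realType) (T : finType) (e : rel T) A (D : R) z :
  0 < D -> D <= (degU e z setT)%:R -> phi e A z <= psi e A z / D.
Proof.
move=> hD hz; rewrite /phi /psi -mulrA ler_wpM2l // mulr_suml ler_sum // => x _.
rewrite [X in _ <= X]mulrAC ler_wpM2r //.
have hz0 : 0 < ((degU e z setT)%:R : R) by apply: lt_le_trans hz.
rewrite /pr ler_wpM2l // lef_pV2 ?posrE //.
Qed.

Lemma step_bound (R : realType) (T : finType) (e : rel T) A (D : R) z :
  0 < D -> (forall u, D <= (degU e u setT)%:R) ->
  \sum_y pr e z y * phi e A y <= (cut_size e A)%:R / D ^+ 2.
Proof.
move=> hD hdeg.
apply: (@le_trans _ _ (\sum_y D^-1 * (psi e A y / D))).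
  apply: ler_sum => y _; apply: ler_pM; rewrite ?phi_ge0 /pr ?divr_ge0 //.
    exact: pr_le.
  exact: phi_le.
rewrite -sum_psi -mulr_sumr -mulr_suml expr2 invfM.
by rewrite mulrC mulrA.
Qed.

Lemma Ht_bound (R : realType) (T : finType) (e : rel T) (A : {set T}) (D : R) v t L :
  0 < D -> (forall u, D <= (degU e u setT)%:R) -> (t < L)%N ->
  WS e L v (@Ht R T A t L) <= (if t is 0 then phi e A v else (cut_size e A)%:R / D ^+ 2).
Proof.
move=> hD hdeg htL.
have hd : @degpos R T e by move=> u; apply: lt_le_trans (hdeg u).
rewrite (@LT R T e A v t L hd htL); case: t htL => [|s] _.
  by rewrite WS0 ffunE.
rewrite WS_step -(@WS_const R T e s v ((cut_size e A)%:R / D ^+ 2) hd); apply: WS_le => g.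
under eq_bigr do rewrite ext_max.
exact: step_bound.
Qed.

Lemma P1 (R : realType) (T : finType) (A : {set T}) (X : nat -> T) m :
  ([exists t : 'I_m.+1, [&& (1 <= t)%N, X t \in A & X t.+1 \notin A]] %:R : R)
  <= \sum_(i < m) ((X i.+1 \in A) && (X i.+2 \notin A))%:R.
Proof.
case: existsP => [[t /and3P[h1 h2 h3]]|_]; last by rewrite sumr_ge0.
case: t h1 h2 h3 => -[//|s] hs _ h2 h3.
rewrite (bigD1 (Ordinal (hs : (s < m)%N))) //= h2 h3 /=.
by rewrite lerDl sumr_ge0.
Qed.

Lemma first_exit (T : finType) (A : {set T}) (X : nat -> T) m t :
  (t <= m)%N -> X t \notin A ->
  (X 0 \notin A) || [exists i : 'I_m, (X i \in A) && (X i.+1 \notin A)].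
Proof.
elim: t => [|s IH] hsm hX; first by rewrite hX.
case hs: (X s \in A); last by apply: IH; [apply: ltnW | rewrite hs].
apply/orP; right; apply/existsP; exists (Ordinal (hsm : (s < m)%N)) => /=.
by rewrite hs hX.
Qed.

Lemma P2 (R : realType) (T : finType) (A : {set T}) (X : nat -> T) m :
  1 - (X 0 \notin A)%:R - \sum_(i < m) ((X i \in A) && (X i.+1 \notin A))%:R
  <= ([forall t : 'I_m.+1, X t \in A] %:R : R).
Proof.
have hs : 0 <= \sum_(i < m) (((X i \in A) && (X i.+1 \notin A))%:R : R) by rewrite sumr_ge0.
case: (boolP [forall t : 'I_m.+1, X t \in A]) => [_|].
  by case: (X 0 \notin A) => /=; lra.
rewrite negb_forall => /existsP[t ht].
have := @first_exit T A X m t (ltn_ord t) ht.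
case/orP => [h0|/existsP[i /andP[h1 h2]]].
  by rewrite h0 /=; lra.
rewrite (bigD1 i) //= h1 h2 /=.
have hs' : 0 <= \sum_(j < m | j != i) (((X j \in A) && (X j.+1 \notin A))%:R : R) by rewrite sumr_ge0.
case: (X 0 \notin A) => /=; rewrite ?subr0; lra.
Qed.

Lemma num1 (R : realType) (n C m cut K delta : R) :
  0 < n -> 0 < delta -> 0 <= m -> m <= C * Num.sqrt n ->
  0 <= cut -> cut <= K * (n * Num.sqrt n) -> 0 <= K -> 0 <= C ->
  m * (cut / (delta * n) ^+ 2) <= C * K / delta ^+ 2.
Proof.
move=> hn hd hm0 hm hc0 hc hK hC.
have hs : Num.sqrt n * Num.sqrt n = n by rewrite -expr2 sqr_sqrtr // ltW.
have h1 : m * cut <= (C * Num.sqrt n) * (K * (n * Num.sqrt n)) by apply: ler_pM.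
have -> : C * K / delta ^+ 2 = ((C * Num.sqrt n) * (K * (n * Num.sqrt n))) / (delta * n) ^+ 2.
  have -> : (C * Num.sqrt n) * (K * (n * Num.sqrt n)) = C * K * n * (Num.sqrt n * Num.sqrt n) by ring.
  rewrite hs; field; rewrite ?gt_eqF //.
rewrite mulrA ler_wpM2r // invr_ge0 exprn_ge0 // mulr_ge0 // ltW //.
Qed.

Lemma powR32 (R : realType) (n : R) : 0 < n -> powR n (3 / 2) = n * Num.sqrt n.
Proof.
move=> hn.
have -> : (3 / 2 : R) = 1 + 2^-1 by field.
rewrite powRD; last by apply/implyP => _; rewrite gt_eqF.
by rewrite powRr1 ?ltW // powR12_sqrt // ltW.
Qed.

Lemma inord0 (T : finType) L (f : {ffun 'I_L.+1 -> T}) : f (inord 0) = f ord0.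
Proof. by congr (f _); apply: val_inj; rewrite /= inordK. Qed.

Theorem lemma3p5 (R : realType) (T : finType) (e : rel T) (delta eps : R)
  (k : nat) (P : 'I_k -> {set T}) (theta : R) :
  simple_graph e -> 0 < delta <= 1 -> 0 < eps ->
  (forall v : T, delta * #|T|%:R <= (degU e v setT)%:R) ->
  good_decomposition e eps delta (powR (#|T|%:R) (3 / 2)) P theta ->
  (forall C : R, 0 < C -> forall (i : 'I_k) (v : T),
     let m := Num.truncn (C * Num.sqrt (#|T|%:R)) in
     walk_prob e m.+1 v
       (fun X => [exists t : 'I_m.+1,
                    [&& (1 <= t)%N, X t \in P i & X t.+1 \notin P i]])
     <= C * theta ^+ 2 * eps ^+ 9 / delta ^+ 2)
  /\
  (forall C : R, 0 < C -> forall i : 'I_k,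
     let m := Num.truncn (C * Num.sqrt (#|T|%:R)) in
     exists V' : {set T},
       [/\ V' \subset P i,
           delta ^+ 4 * #|T|%:R / 80 <= #|V'|%:R &
           forall v : T, v \in V' ->
             1 - 80 * C * theta ^+ 2 * eps ^+ 9 / delta ^+ 6
               <= walk_prob e m v (fun X => [forall t : 'I_m.+1, X t \in P i])]).
Proof.
move=> _ /andP[hd0 hd1] he hdeg hgood.
case: hgood => _ _ _ _ [_ _ _ _ hP].
set n : R := #|T|%:R.
have hn0 : 0 <= n by rewrite /n ler0n.
have hth : 0 <= theta ^+ 2 by rewrite exprn_even_ge0.
have he9 : 0 <= eps ^+ 9 by rewrite exprn_ge0 // ltW.
have key : forall C (i : 'I_k), 0 < C -> 0 < n ->
    (Num.truncn (C * Num.sqrt n))%:R * ((cut_size e (P i))%:R / (delta * n) ^+ 2)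
    <= C * theta ^+ 2 * eps ^+ 9 / delta ^+ 2.
  move=> C i hC hn; have [_ _ _ hcut] := hP i.
  rewrite -[C * theta ^+ 2 * eps ^+ 9]mulrA; apply: num1 => //.
  - by rewrite truncn_le mulr_ge0 ?sqrtr_ge0 // ltW.
  - apply: (le_trans hcut); rewrite (@powR32 R n hn) [X in X * _]mulrC.
    by rewrite mulrA.
  - by rewrite mulr_ge0.
  - by rewrite ltW.
split.
  move=> C hC i v; cbv zeta; set m := Num.truncn _.
  have hn : 0 < n by rewrite /n ltr0n; apply/card_gt0P; exists v.
  have hD : 0 < delta * n by rewrite mulr_gt0.
  set A := P i.
  rewrite walk_probE.
  apply: (@le_trans _ _ (WS e m.+1 v (fun f => \sum_(j < m) @Ht R T A j.+1 m.+1 f))).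
    by apply: WS_le => f; exact: (P1 R T A (fun j => f (inord j)) m).
  rewrite WS_sum.
  apply: (@le_trans _ _ (\sum_(j < m) ((cut_size e A)%:R / (delta * n) ^+ 2))).
    apply: ler_sum => j _.
    exact: (@Ht_bound R T e A (delta * n) v j.+1 m.+1 hD hdeg (ltn_ord j)).
  rewrite sumr_const card_ord -[_ *+ m]mulr_natl; exact: (key C i hC hn).
move=> C hC i; cbv zeta; set m := Num.truncn _.
set A := P i.
have [hsize _ _ hcut] := hP i.
case: (posnP #|T|) => [hT0|hTpos].
  exists set0; split; first exact: sub0set.
    by rewrite cards0 /n hT0 mulr0 mul0r.
  by move=> v; rewrite inE.
have hn : 0 < n by rewrite /n ltr0n.
have hD : 0 < delta * n by rewrite mulr_gt0.
have hc0 : 0 <= ((cut_size e A)%:R : R) by rewrite ler0n.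
set V' := [set z in A | psi e A z * (delta * n) <= 4 * (cut_size e A)%:R].
have hsub : V' \subset A by apply/subsetP => z; rewrite inE => /andP[].
exists V'; split => //.
- have hcard : (#|V'|%:R : R) + #|A :\: V'|%:R = #|A|%:R.
    by rewrite -natrD -(cardsID V' A) (setIidPr hsub).
  have hdiff : (#|A :\: V'|%:R : R) <= delta * n / 4.
    case: (posnP (cut_size e A)) => [hcz|hcpos].
      suff -> : A :\: V' = set0 by rewrite cards0 divr_ge0 // ltW.
      apply/setP => z; rewrite !inE.
      case hz: (z \in A); rewrite ?andbF //= andbT.
      have hs : \sum_z (psi e A z : R) = 0 by rewrite sum_psi hcz.
      have -> : psi e A z = 0 :> R.
        by apply: (psumr_eq0P _ hs) => // y _; exact: psi_ge0.
      by rewrite mul0r hcz mulr0 lexx.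
    have hcp : 0 < ((cut_size e A)%:R : R) by rewrite ltr0n.
    have h1 : (#|A :\: V'|%:R * 4) * (cut_size e A)%:R <= (delta * n) * (cut_size e A)%:R.
      rewrite -mulrA mulr_natl -sumr_const.
      apply: (@le_trans _ _ (\sum_(z in A :\: V') psi e A z * (delta * n))).
        apply: ler_sum => z; rewrite !inE => /andP[hz1 hz2].
        by rewrite hz2 /= in hz1; apply: ltW; rewrite ltNge.
      rewrite -sum_psi [X in _ <= X]mulrC mulr_suml [X in X <= _]big_mkcond /=; apply: ler_sum => z _.
      case: (z \in A :\: V') => //.
      by rewrite mulr_ge0 ?psi_ge0 // ltW.
    rewrite ler_pM2r // in h1; lra.
  have h4 : delta ^+ 4 * n <= delta * n.
    rewrite ler_wpM2r // exprS ger_pMr // exprn_ile1 // ltW //.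
  rewrite -/n in hsize; lra.
- move=> v; rewrite inE => /andP[hvA hpsi].
  rewrite walk_probE.
  apply: (@le_trans _ _ (WS e m v (fun f => 1 - ((f (inord 0)) \notin A)%:R
                                   - \sum_(j < m) @Ht R T A j m f))); last first.
    by apply: WS_le => f; exact: (P2 R T A (fun j => f (inord j)) m).
  have hdeg' : forall u, delta * n <= (degU e u setT)%:R by [].
  have hdp : @degpos R T e by move=> u; apply: lt_le_trans (hdeg u).
  have hWa : WS e m v (fun f => (((f ord0) \notin A)%:R : R)) = 0.
    by rewrite /WS big1 // => f /eqP ->; rewrite hvA mulr0.
  rewrite (@WS_eq R T e m v _ (fun f => 1 + (- (((f ord0) \notin A)%:R))
                                   + - \sum_(j < m) @Ht R T A j m f)); last first.
    by move=> f; rewrite inord0.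
  rewrite !WS_add WS_const // !WS_opp hWa oppr0 addr0 WS_sum.
  set c := (cut_size e A)%:R / (delta * n) ^+ 2.
  have hcc : 0 <= c by rewrite divr_ge0 // exprn_ge0 // ltW.
  have hphi : phi e A v <= 4 * c.
    apply: (le_trans (@phi_le R T e A (delta * n) v hD (hdeg v))).
    rewrite /c ler_pdivrMr //.
    have -> : 4 * ((cut_size e A)%:R / (delta * n) ^+ 2) * (delta * n) = 4 * (cut_size e A)%:R / (delta * n).
      by field; rewrite (gt_eqF hn) (gt_eqF hd0).
    by rewrite ler_pdivlMr.
  have hsum : \sum_(j < m) WS e m v (@Ht R T A j m) <= m%:R * (5 * c).
    have -> : m%:R * (5 * c) = \sum_(j < m) (5 * c) by rewrite sumr_const card_ord mulr_natl.
    apply: ler_sum => j _.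
    apply: (le_trans (@Ht_bound R T e A (delta * n) v j m hD hdeg' (ltn_ord j))).
    case: (nat_of_ord j) => [|s]; first lra.
    have := phi_ge0 R T e A v; rewrite -/c; lra.
  have hk := key C i hC hn; rewrite -/c -/m -/A in hk.
  have hX : 0 <= C * theta ^+ 2 * eps ^+ 9.
    by apply: mulr_ge0 => //; apply: mulr_ge0 => //; apply: ltW.
  have hq : C * theta ^+ 2 * eps ^+ 9 / delta ^+ 2 <= C * theta ^+ 2 * eps ^+ 9 / delta ^+ 6.
    rewrite ler_wpM2l // lef_pV2 ?posrE ?exprn_gt0 //.
    rewrite (_ : 6 = 2 + 4)%N // exprD ger_pMr ?exprn_gt0 // exprn_ile1 // ltW //.
  have -> : 80 * C * theta ^+ 2 * eps ^+ 9 / delta ^+ 6 =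
            80 * (C * theta ^+ 2 * eps ^+ 9 / delta ^+ 6) by rewrite !mulrA.
  move: hq hsum hk; set Y1 := C * theta ^+ 2 * eps ^+ 9 / delta ^+ 2.
  set Y2 := C * theta ^+ 2 * eps ^+ 9 / delta ^+ 6.
  have hY1 : 0 <= Y1 by rewrite /Y1 divr_ge0 // exprn_ge0 // ltW.
  set M := (m%:R : R); set S := \sum_(j < m) _.
  move=> hq hsum hk.
  have : M * (5 * c) = 5 * (M * c) by rewrite mulrCA.
  lra.
Qed.
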